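(* Let $\mathcal S$ be a subfamily of a left-cancellative category $\mathcal C$ and let $(g_1,\dots,g_p)$ be an $\mathcal S$-greedy path in $\mathcal C$. Then for every $m$ with $1\le m\le p$, every $s\in\mathcal S^m$ and every $f\in\mathcal C$ such that $fg_1$ is defined, the relation $s\preccurlyeq fg_1\cdots g_p$ implies $s\preccurlyeq fg_1\cdots g_m$. In other words, the length-two path $(g_1\cdots g_m,\ g_{m+1}\cdots g_p)$ is $\mathcal S^m$-greedy.
   Context: A category is left-cancellative if $fg=fg'$ implies $g=g'$. For $f,g$ in $\mathcal C$, $f\preccurlyeq g$ ($f$ left-divides $g$) means $g=fg'$ for some $g'$. For $\mathcal S\subseteq\mathcal C$, $\mathcal S^m$ denotes the family of all products $s_1\cdots s_m$ of $m$ composable elements of $\mathcal S$. A length-two path $(g_1,g_2)$ (with $g_1g_2$ defined) is $\mathcal S$-greedy if for every $s\in\mathcal S$ and every $f\in\mathcal C$ with $fg_1$ defined, $s\preccurlyeq fg_1g_2$ implies $s\preccurlyeq fg_1$; a path $(g_1,\dots,g_p)$ is $\mathcal S$-greedy if each of its length-two subpaths $(g_i,g_{i+1})$ is $\mathcal S$-greedy. *)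

(* Defs.v *)
From mathcomp Require Import all_boot.
Set Implicit Arguments. Unset Strict Implicit. Unset Printing Implicit Defensive.

(* A (small) category presented by its family of morphisms: every morphism
   has a source and a target object; [mcomp f g] is the composite "f g"
   (first f, then g), meaningful when [tgt f = src g]. *)
Record category := Category {
  Ob : Type;
  Mor : Type;
  src : Mor -> Ob;
  tgt : Mor -> Ob;
  mcomp : Mor -> Mor -> Mor;
  idm : Ob -> Mor;
  src_idm : forall x, src (idm x) = x;
  tgt_idm : forall x, tgt (idm x) = x;
  src_mcomp : forall f g, tgt f = src g -> src (mcomp f g) = src f;
  tgt_mcomp : forall f g, tgt f = src g -> tgt (mcomp f g) = tgt g;
  mcomp_idl : forall f, mcomp (idm (src f)) f = f;
  mcomp_idr : forall f, mcomp f (idm (tgt f)) = f;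
  compA : forall f g h, tgt f = src g -> tgt g = src h ->
    mcomp (mcomp f g) h = mcomp f (mcomp g h)
}.

Section Defs.
Variable C : category.
Local Notation Mor := (Mor C).
Local Notation mcomp := (@mcomp C).

Definition left_cancellative : Prop :=
  forall f g g', tgt f = src g -> tgt f = src g' -> mcomp f g = mcomp f g' -> g = g'.

Definition ldiv (f g : Mor) : Prop :=
  exists g', tgt f = src g' /\ mcomp f g' = g.

Fixpoint composable (l : seq Mor) : Prop :=
  match l with
  | x :: ((y :: _) as l') => tgt x = src y /\ composable l'
  | _ => True
  end.

Fixpoint allS (S : Mor -> Prop) (l : seq Mor) : Prop :=
  match l with [::] => True | x :: l' => S x /\ allS S l' end.

(* s lies in S^m (m >= 1): s = s_1 ... s_m with composable s_i in S *)
Definition Spow (S : Mor -> Prop) (m : nat) (s : Mor) : Prop :=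
  exists (x : Mor) (l : seq Mor),
    size l = m.-1 /\ S x /\ allS S l /\
    composable (x :: l) /\ s = foldl mcomp x l.

Definition greedy2 (S : Mor -> Prop) (g1 g2 : Mor) : Prop :=
  tgt g1 = src g2 /\
  forall (s f : Mor), S s -> tgt f = src g1 ->
    ldiv s (mcomp (mcomp f g1) g2) -> ldiv s (mcomp f g1).

Fixpoint greedy_path (S : Mor -> Prop) (l : seq Mor) : Prop :=
  match l with
  | x :: ((y :: _) as l') => greedy2 S x y /\ greedy_path S l'
  | _ => True
  end.

End Defs.

(* Main.v *)
Require Import Defs.
From mathcomp Require Import all_boot.

Section H.
Variable C : category.
Local Notation mc := (@mcomp C).

Lemma comp_step (x y : Mor C) l : tgt x = src y -> composable (y :: l) ->
  composable (mc x y :: l).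
Proof. case: l => //= z l H [H1 H2]; split => //; rewrite tgt_mcomp //. Qed.

Lemma src_foldl (x : Mor C) l : composable (x::l) -> src (foldl mc x l) = src x.
Proof.
elim: l x => //= y l IH x [Hxy Hc].
rewrite IH ?src_mcomp //. exact: comp_step.
Qed.

Lemma foldl_assoc (a x : Mor C) l : tgt a = src x -> composable (x::l) ->
  foldl mc (mc a x) l = mc a (foldl mc x l).
Proof.
elim: l a x => //= y l IH a x Hax [Hxy Hc].
rewrite Defs.compA // IH //; first by rewrite src_mcomp.
exact: comp_step.
Qed.

Lemma comp_take (x : Mor C) l n : composable (x::l) -> composable (x::take n l).
Proof.
elim: l x n => //= y l IH x [|n] //= [H1 H2]; split => //; exact: IH.
Qed.

Lemma greedy_comp S (x : Mor C) l : greedy_path S (x::l) -> composable (x::l).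
Proof.
elim: l x => //= y l IH x [[H _] G]; split => //; exact: IH.
Qed.

Lemma L1 S gs : forall (g1 f s : Mor C), greedy_path S (g1::gs) -> S s ->
  tgt f = src g1 -> ldiv s (foldl mc (mc f g1) gs) -> ldiv s (mc f g1).
Proof.
elim: gs => //= g2 gs IH g1 f s [G12 G] Ss Hf Hd.
have H12 := G12.1.
apply: (G12.2 s f Ss Hf).
apply: (IH g2 (mc f g1)) => //. rewrite tgt_mcomp //.
Qed.
End H.
Arguments L1 {C S gs g1 f s}.
Arguments greedy_comp {C S x l}.

(* The path (g_1,...,g_p) is [g1 :: gs], so p = (size gs).+1;
   f g_1 ... g_k is [foldl mcomp (mcomp f g1) (take k.-1 gs)]. *)
Theorem mainTheorem2 (C : category) (S : Mor C -> Prop)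
    (g1 : Mor C) (gs : seq (Mor C)) :
  left_cancellative C ->
  greedy_path S (g1 :: gs) ->
  forall m : nat, 1 <= m <= (size gs).+1 ->
  forall s : Mor C, Spow S m s ->
  forall f : Mor C, tgt f = src g1 ->
  ldiv s (foldl (@mcomp C) (mcomp f g1) gs) ->
  ldiv s (foldl (@mcomp C) (mcomp f g1) (take m.-1 gs)).
Proof.
move=> LC.
elim: gs g1 => [|g2 gs IH] g1 G m Hm s Hs f Hf Hd.
  by case: m.-1 Hd.
case: m Hm Hs => [|[|m']] // Hm [x [l [Hl [Sx [Al [Cl Es]]]]]]; subst s.
  case: l Hl Al Cl Hd => // _ _ _ /= Hd.
  exact: (L1 G Sx Hf Hd).
case: l Hl Al Cl Hd => // y l /= [Hl] [Sy Al] [Hxy Cl] Hd.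
have Gc := greedy_comp G.
move: (G) => /= [[H12 _] G'].
have Gc' := greedy_comp G'.
rewrite foldl_assoc // in Hd *.
set s' := foldl (@mcomp C) y l in Hd *.
have Hss' : src s' = src y by rewrite src_foldl.
case: Hd => g' [Htg' Heq].
have Hts : tgt s' = src g'.
  by rewrite -Htg' tgt_mcomp // Hss'.
have Hx : ldiv x (foldl (@mcomp C) (mcomp f g1) (g2 :: gs)).
  exists (mcomp s' g'); split; first by rewrite src_mcomp // Hss'.
  by rewrite /= -Heq Defs.compA // Hss'.
have [h [Hxh Hfg]] := L1 G Sx Hf Hx.
have Hth : tgt h = src g2.
  by rewrite -H12 -(tgt_mcomp Hf) -Hfg tgt_mcomp.
move: Heq; rewrite /= -Hfg (Defs.compA Hxh Hth).
rewrite foldl_assoc; last by apply: comp_step.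
  2: by rewrite src_mcomp.
rewrite Defs.compA ?Hss' // => Heq.
have Hd' := LC _ _ _ _ _ Heq.
have Hd'' : ldiv s' (foldl (@mcomp C) (mcomp h g2) gs).
  exists g'; split => //; apply: Hd'.
    by rewrite src_mcomp ?Hss'.
  by rewrite src_foldl ?src_mcomp //; apply: comp_step.
have Hm' : 1 <= m'.+1 <= (size gs).+1 by rewrite /=; move: Hm => /=.
have Hsp : Spow S m'.+1 s' by exists y, l.
have [k [Htk Hk]] := IH g2 G' m'.+1 Hm' s' Hsp h Hth Hd''.
exists k; split; first by rewrite tgt_mcomp // Hss'.
have Ct : composable (g2 :: take m' gs) by apply: comp_take.
rewrite foldl_assoc; [| by rewrite src_mcomp | by apply: comp_step].
by rewrite Defs.compA ?Hss' // Hk.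
Qed.
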